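(* Let $G$ be a cograph with (canonical) cotree $T_G$, and let $c$ be an inner vertex of $T_G$ with label $+$. Then the cograph $T_G(c)$ satisfies property $\mathcal{P}$ if and only if $c$ has at least two children in $T_G$ and either (i) there exist at least two children of $c$ in $T_G$ each of which is either a leaf or a vertex with label $\mathcal{R}$, or (ii) one of the children of $c$ is a vertex $u$ with label $\mathcal{R}$ such that $T_G(u)$ is the disjoint union of two complete graphs.
   Context: All graphs are finite and simple. For a graph $H$ and $v\in V(H)$, $N_H[v]$ denotes the closed neighbourhood of $v$. A set $D\subseteq V(H)$ is dominating if every vertex outside $D$ has a neighbour in $D$; $\gamma(H)$ is the minimum size of a dominating set. A dominating set $S$ is a secure dominating set if for every $x\in V(H)\setminus S$ there is a neighbour $y\in S$ of $x$ such that $(S\cup\{x\})\setminus\{y\}$ is dominating; $\gamma_s(H)$ is the minimum size of a secure dominating set. The join $G_1+G_2$ of disjoint graphs is their disjoint union together with all edges between $V(G_1)$ and $V(G_2)$. Cographs are defined recursively: $K_1$ is a cograph; the complement of a cograph is a cograph; the disjoint union of $k\ge 2$ cographs is a cograph. A cograph $G$ is represented by its cotree $T_G$: a rooted tree whose leaves are the vertices of $G$ and whose inner vertices are labelled $\cup$ or $+$, where the graph corresponding to an inner vertex is the disjoint union (label $\cup$) or the join (label $+$) of the graphs corresponding to its children; in this cotree the labels alternate, i.e. every child of a $\cup$-vertex is a leaf or a $+$-vertex, and every child of a $+$-vertex is a leaf or a $\cup$-vertex. For a vertex $v$ of $T_G$, $T_G(v)$ denotes the subgraph of $G$ induced by the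 leaves of the subtree of $T_G$ rooted at $v$. A vertex $u$ of $T_G$ has label $\mathcal{R}$ if (a) $u$ has label $\cup$, (b) $u$ has exactly two children $x,y$ in $T_G$, (c) $\gamma(T_G(x))=1$, and (d) $\gamma_s(T_G(y))=1$. A cograph $H$ which is the join of cographs $H_1,\dots,H_\ell$ with $\ell\ge 2$ satisfies property $\mathcal{P}$ if there exist two distinct vertices $x,y\in V(H)$ such that $\{x,y\}$ is a dominating set of $H$ and each of $V(H)\setminus N_H[x]$ and $V(H)\setminus N_H[y]$ is either empty or a clique (a set of vertices inducing a complete graph). *)

(* Defs.v *)
From Stdlib Require List.
From mathcomp Require Import all_boot.
Set Implicit Arguments. Unset Strict Implicit. Unset Printing Implicit Defensive.

Section Graphs.
Variable V : finType.
Variable e : rel V.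

(* All notions below are for the induced subgraph of (V, e) on the vertex set S. *)

Definition dominating (S D : {set V}) : bool :=
  (D \subset S) && [forall x in S :\: D, [exists y in D, e x y]].

Definition gamma (S : {set V}) : nat :=
  \big[minn/#|S|]_(D : {set V} | dominating S D) #|D|.

Definition secure_dominating (S D : {set V}) : bool :=
  dominating S D &&
  [forall x in S :\: D,
     [exists y in D, e x y && dominating S ((D :|: [set x]) :\ y)]].

Definition gamma_s (S : {set V}) : nat :=
  \big[minn/#|S|]_(D : {set V} | secure_dominating S D) #|D|.

Definition is_clique (A : {set V}) : Prop :=
  forall x y, x \in A -> y \in A -> x != y -> e x y.

Definition two_cliques (S : {set V}) : Prop :=
  exists A B : {set V},
    [/\ A != set0, B != set0, [disjoint A & B], A :|: B = S &
     [/\ is_clique A, is_clique B &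
         forall a b, a \in A -> b \in B -> ~~ e a b]].

Definition non_nbhd (S : {set V}) (z : V) : {set V} :=
  [set w in S | (w != z) && ~~ e z w].

Definition propP (S : {set V}) : Prop :=
  exists x y, [/\ x \in S, y \in S, x != y, dominating S [set x; y] &
   [/\ (non_nbhd S x = set0 \/ is_clique (non_nbhd S x)) &
    (non_nbhd S y = set0 \/ is_clique (non_nbhd S y))]].

End Graphs.

(* Cotrees: leaves are labelled by vertices; inner vertices carry a boolean
   label: true = '+' (join), false = 'cup' (disjoint union). *)
Inductive cotree (V : Type) : Type :=
| CLeaf of V
| CNode of bool & seq (cotree V).

Arguments CLeaf {V}.
Arguments CNode {V}.

Fixpoint leaves (V : Type) (t : cotree V) : seq V :=
  match t with
  | CLeaf v => [:: v]
  | CNode _ ch => flatten (map (@leaves V) ch)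
  end.

(* vertex set of T_G(t) *)
Definition leafset (V : finType) (t : cotree V) : {set V} := [set x | x \in leaves t].

(* s is a vertex of the tree t (i.e. the subtree rooted at a vertex of t) *)
Inductive is_subtree (V : Type) : cotree V -> cotree V -> Prop :=
| st_refl t : is_subtree t t
| st_child s b ch c : Stdlib.Lists.List.In c ch -> is_subtree s c -> is_subtree s (CNode b ch).

(* Canonical cotree T of the graph (V, e): the leaves are exactly the vertices
   (each once), every inner vertex has at least two children, labels
   alternate, and the graph of each inner vertex is the disjoint union
   (label false) / join (label true) of the graphs of its children, i.e.
   vertices in different children are adjacent iff the label is true. *)
Definition is_cotree (V : finType) (e : rel V) (T : cotree V) : Prop :=
  [/\ uniq (leaves T), (forall v : V, v \in leaves T) &
   forall b ch, is_subtree (CNode b ch) T ->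
     [/\ 2 <= size ch,
         (forall c, Stdlib.Lists.List.In c ch ->
            match c with CLeaf _ => True | CNode b' _ => b' = ~~ b end) &
         (forall i j x y, i < size ch -> j < size ch -> i <> j ->
            x \in leaves (nth (CNode b [::]) ch i) ->
            y \in leaves (nth (CNode b [::]) ch j) -> e x y = b)]].

Definition labelR (V : finType) (e : rel V) (u : cotree V) : Prop :=
  exists x y, u = CNode false [:: x; y] /\
    ((gamma e (leafset x) = 1 /\ gamma_s e (leafset y) = 1) \/
     (gamma e (leafset y) = 1 /\ gamma_s e (leafset x) = 1)).

Definition is_leaf (V : Type) (t : cotree V) : Prop :=
  match t with CLeaf _ => True | CNode _ _ => False end.

(* Main.v *)
Require Import Defs.
From Stdlib Require List.
From mathcomp Require Import all_boot.
Set Implicit Arguments. Unset Strict Implicit. Unset Printing Implicit Defensive.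

Section Aux.
Variable V : finType.
Variable e : rel V.
Hypothesis esym : symmetric e.
Hypothesis eirr : irreflexive e.

Local Notation d0 := (@CNode V false [::]).

Lemma nthIn (ch : seq (cotree V)) d i : i < size ch -> List.In (nth d ch i) ch.
Proof. elim: ch i => //= c ch IH [|i] //=; first by left. by move=> Hi; right; apply: IH. Qed.

Lemma Innth c (ch : seq (cotree V)) : List.In c ch -> exists2 i, i < size ch & nth d0 ch i = c.
Proof.
elim: ch => //= a ch IH [->|H]; first by exists 0.
by case: (IH H) => i Hi Hn; exists i.+1.
Qed.

Lemma mem_node b ch (x : V) : (x \in leaves (CNode b ch)) =
   has (fun c => x \in leaves c) ch.
Proof. rewrite /=; elim: ch => //= c ch IH; by rewrite mem_cat IH. Qed.

Lemma mem_nodeP b ch (x : V) : reflect (exists2 i, i < size ch & x \in leaves (nth d0 ch i))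
   (x \in leaves (CNode b ch)).
Proof. rewrite mem_node; exact: has_nthP. Qed.

Lemma mem_node_nth b ch i (x : V) : i < size ch -> x \in leaves (nth d0 ch i) ->
  x \in leaves (CNode b ch).
Proof. move=> Hi Hx; apply/mem_nodeP; by exists i. Qed.

Lemma subtree_trans (s t r : cotree V) : is_subtree s t -> is_subtree t r -> is_subtree s r.
Proof. move=> H1 H2; elim: H2 H1 => // s0 b ch c Hin _ IH H1; apply: (st_child b Hin (IH H1)). Qed.

Lemma subtree_child b ch i : i < size ch -> is_subtree (nth d0 ch i) (CNode b ch).
Proof. move=> Hi; apply: (st_child b (nthIn d0 Hi) (st_refl _)). Qed.

Lemma uniq_sub (s t : cotree V) : is_subtree s t -> uniq (leaves t) -> uniq (leaves s).
Proof.
elim => // s0 b ch c Hin _ IH Hu; apply: IH; move: Hu Hin => /=.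
elim: ch => //= a l IHl; rewrite cat_uniq => /and3P[H1 _ H3] [<-|H] //.
exact: IHl.
Qed.

Lemma uniq_disj b ch i j (x : V) : uniq (leaves (CNode b ch)) -> i < size ch -> j < size ch -> i <> j ->
  x \in leaves (nth d0 ch i) -> x \in leaves (nth d0 ch j) -> False.
Proof.
elim: ch i j => //= a l IH [|i] [|j] //=; rewrite cat_uniq => /and3P[_ Hh Hu] Hi Hj Hij.
- move=> Ha Hb; move/negP: Hh; apply; apply/hasP; exists x => //.
  exact: (mem_node_nth b Hj Hb).
- move=> Hb Ha; move/negP: Hh; apply; apply/hasP; exists x => //.
  exact: (mem_node_nth b Hi Hb).
- apply: (IH i j Hu) => //; congruence.
Qed.

Fixpoint ht (t : cotree V) : nat :=
  match t with
  | CLeaf _ => 0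
  | CNode _ ch => (foldr maxn 0 (map ht ch)).+1
  end.

Lemma ht_child b ch c : List.In c ch -> ht c < ht (CNode b ch).
Proof.
elim: ch => //= a l IH [->|H]; first by rewrite ltnS leq_maxl.
apply: (leq_trans (IH H)); by rewrite /= ltnS leq_maxr.
Qed.


Variable T : cotree V.
Hypothesis HT : is_cotree e T.

Lemma nonempty s : is_subtree s T -> exists v, v \in leaves s.
Proof.
move: {2}(ht s).+1 (ltnSn (ht s)) => n; elim: n s => // n IH [v|b ch] Hn Hs.
  by exists v; rewrite /= inE.
case: HT => _ _ /(_ b ch Hs) [Hsz _ _].
case: ch Hsz Hn Hs => // c ch _ Hn Hs.
have Hin : List.In c (c :: ch) by left.
case: (IH c) => [||v Hv].
- by rewrite -ltnS; apply: leq_trans Hn; apply: ht_child Hin.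
- exact: subtree_trans (st_child b Hin (st_refl _)) Hs.
- by exists v; rewrite /= mem_cat Hv.
Qed.

Lemma edge_ch b ch i j x y : is_subtree (CNode b ch) T -> i < size ch -> j < size ch -> i <> j ->
  x \in leaves (nth d0 ch i) -> y \in leaves (nth d0 ch j) -> e x y = b.
Proof.
move=> Hs Hi Hj Hij Hx Hy; case: HT => _ _ /(_ b ch Hs) [_ _ H].
apply: (H i j) => //; by rewrite (set_nth_default d0).
Qed.

Lemma lab_ch b ch i : is_subtree (CNode b ch) T -> i < size ch ->
  match nth d0 ch i with CLeaf _ => True | CNode b' _ => b' = ~~ b end.
Proof.
move=> Hs Hi; case: HT => _ _ /(_ b ch Hs) [_ H _]; apply: H; exact: nthIn.
Qed.

Lemma uniqT s : is_subtree s T -> uniq (leaves s).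
Proof. case: HT => H _ _ Hs; exact: uniq_sub Hs H. Qed.

Lemma size_ch b ch : is_subtree (CNode b ch) T -> 2 <= size ch.
Proof. by case: HT => _ _ /(_ b ch) H /H []. Qed.

Lemma ch_sub b ch i : is_subtree (CNode b ch) T -> i < size ch -> is_subtree (nth d0 ch i) T.
Proof. move=> Hs Hi; exact: subtree_trans (subtree_child b Hi) Hs. Qed.

End Aux.

Lemma bigmin_le (I : finType) (P : pred I) (F : I -> nat) a i : P i ->
  \big[minn/a]_(j | P j) F j <= F i.
Proof.
move=> Pi; rewrite -big_filter.
have : i \in [seq j <- index_enum I | P j] by rewrite mem_filter Pi mem_index_enum.
elim: [seq j <- index_enum I | P j] => // x r IH; rewrite big_cons inE => /orP[/eqP->|H].
  exact: geq_minl.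
exact: leq_trans (geq_minr _ _) (IH H).
Qed.

Lemma bigmin_ind (I : finType) (P : pred I) (F : I -> nat) a (Q : nat -> Prop) :
  Q a -> (forall i, P i -> Q (F i)) -> Q (\big[minn/a]_(j | P j) F j).
Proof.
move=> Qa QF; apply: big_ind => // x y Qx Qy.
by rewrite /minn; case: ifP.
Qed.

Lemma bigmin_ex (I : finType) (P : pred I) (F : I -> nat) a :
  \big[minn/a]_(j | P j) F j = a \/ exists2 i, P i & \big[minn/a]_(j | P j) F j = F i.
Proof.
apply: (bigmin_ind (Q := fun n => n = a \/ exists2 i, P i & n = F i)); first by left.
by move=> i Pi; right; exists i.
Qed.

Section G.
Variable V : finType.
Variable e : rel V.
Hypothesis esym : symmetric e.

Lemma gamma1P (S : {set V}) : gamma e S = 1 ->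
  exists2 x, x \in S & forall w, w \in S -> w != x -> e w x.
Proof.
rewrite /gamma; case: (bigmin_ex (fun D : {set V} => dominating e S D) (fun D => #|D|) #|S|) => [->|[D HD ->]].
  move=> /eqP/cards1P[x Sx]; exists x; first by rewrite Sx set11.
  by move=> w; rewrite Sx inE => ->.
move: HD => /andP[Dsub /forallP Hd] /eqP/cards1P[x Dx]; subst D.
exists x; first by move/subsetP: Dsub; apply; rewrite set11.
move=> w wS wx; have := Hd w; rewrite !inE wS wx /= => /existsP[y /andP[]].
by rewrite inE => /eqP->.
Qed.

Lemma gammas1P (S : {set V}) : gamma_s e S = 1 -> is_clique e S.
Proof.
rewrite /gamma_s; case: (bigmin_ex (fun D : {set V} => secure_dominating e S D) (fun D => #|D|) #|S|) => [->|[D HD ->]].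
  move=> /eqP/cards1P[x Sx] a b; rewrite Sx !inE => /eqP-> /eqP->; by rewrite eqxx.
move: HD => /andP[/andP[Dsub /forallP Hd] /forallP Hs] /eqP/cards1P[v Dv]; subst D.
have Hv : forall w, w \in S -> w != v -> e w v.
  move=> w wS wv; have := Hd w; rewrite !inE wS wv /= => /existsP[y /andP[]].
  by rewrite inE => /eqP->.
have Hx : forall x w, x \in S -> x != v -> w \in S -> w != x -> e w x.
  move=> x w xS xv wS wx; have := Hs x; rewrite !inE xS xv /= => /existsP[y /andP[]].
  rewrite inE => /eqP-> /andP[_ /andP[_ /forallP Hd2]].
  have := Hd2 w; rewrite !inE wS andbT => /implyP H.
  have Hn : ~~ ((w != v) && ((w == v) || (w == x))) by rewrite (negbTE wx) orbF andNb.
  move: (H Hn) => /existsP[z /andP[]].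
  rewrite !inE => /andP[zv /orP[/eqP zv'|/eqP ->]] //; by rewrite zv' eqxx in zv.
move=> a b aS bS ab.
case: (eqVneq a v) => [av|av].
  subst a; rewrite esym; apply: Hv bS _; by rewrite eq_sym.
case: (eqVneq b v) => [bv|bv]; first by subst b; apply: Hv.
rewrite esym; apply: Hx => //; by rewrite eq_sym.
Qed.

Lemma gamma_ge1 (S : {set V}) x : x \in S -> 1 <= gamma e S.
Proof.
move=> xS; rewrite /gamma; apply: (bigmin_ind (Q := fun n => 1 <= n)).
  by rewrite card_gt0; apply/set0Pn; exists x.
move=> D /andP[_ /forallP Hd]; rewrite card_gt0; apply/set0Pn.
case: (boolP (x \in D)) => [H|H]; first by exists x.
have := Hd x; rewrite inE H xS /= => /existsP[y /andP[yD _]]; by exists y.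
Qed.

Lemma gamma_s_ge1 (S : {set V}) x : x \in S -> 1 <= gamma_s e S.
Proof.
move=> xS; rewrite /gamma_s; apply: (bigmin_ind (Q := fun n => 1 <= n)).
  by rewrite card_gt0; apply/set0Pn; exists x.
move=> D /andP[/andP[_ /forallP Hd] _]; rewrite card_gt0; apply/set0Pn.
case: (boolP (x \in D)) => [H|H]; first by exists x.
have := Hd x; rewrite inE H xS /= => /existsP[y /andP[yD _]]; by exists y.
Qed.

Lemma gamma1I (S : {set V}) x : x \in S -> (forall w, w \in S -> w != x -> e w x) ->
  gamma e S = 1.
Proof.
move=> xS Hx; apply/eqP; rewrite eqn_leq (gamma_ge1 xS) andbT.
have -> : 1 = #|[set x]| by rewrite cards1.
apply: bigmin_le; apply/andP; split; first by rewrite sub1set.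
apply/forallP => w; apply/implyP; rewrite !inE => /andP[wx wS].
apply/existsP; exists x; by rewrite inE eqxx Hx.
Qed.

Lemma gammas1I (S : {set V}) x : x \in S -> is_clique e S -> gamma_s e S = 1.
Proof.
move=> xS Hc; apply/eqP; rewrite eqn_leq (gamma_s_ge1 xS) andbT.
have -> : 1 = #|[set x]| by rewrite cards1.
apply: bigmin_le; apply/andP; split.
  apply/andP; split; first by rewrite sub1set.
  apply/forallP => w; apply/implyP; rewrite !inE => /andP[wx wS].
  apply/existsP; exists x; by rewrite inE eqxx Hc.
apply/forallP => w; apply/implyP; rewrite !inE => /andP[wx wS].
apply/existsP; exists x; rewrite inE eqxx /= (Hc w x wS xS wx) /=.
apply/andP; split.
  apply/subsetP => z; rewrite !inE => /andP[zx /orP[/eqP zx'|/eqP ->]] //.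
  by rewrite zx' eqxx in zx.
apply/forallP => z; apply/implyP; rewrite !inE => /andP[Hz zS].
apply/existsP; exists w; rewrite !inE eqxx orbT wx /=.
apply: Hc => //; apply: contraNneq Hz => ->; by rewrite wx eqxx orbT.
Qed.

End G.

From mathcomp Require Import zify.

Section M.
Variable V : finType.
Variable e : rel V.
Hypothesis esym : symmetric e.
Hypothesis eirr : irreflexive e.
Variable T : cotree V.
Hypothesis HT : is_cotree e T.

Local Notation d0 := (@CNode V false [::]).

Lemma clique_or (A : {set V}) : A = set0 \/ is_clique e A -> is_clique e A.
Proof. case=> // ->; move=> x y; by rewrite inE. Qed.

Lemma nn_child ch i x : is_subtree (CNode true ch) T -> i < size ch -> x \in leaves (nth d0 ch i) ->
  non_nbhd e (leafset (CNode true ch)) x = non_nbhd e (leafset (nth d0 ch i)) x.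
Proof.
move=> Hs Hi Hx; apply/setP => w; rewrite !inE.
case: (boolP (w \in leaves (nth d0 ch i))) => Hw.
  by rewrite (mem_node_nth true Hi Hw).
case: (boolP (w \in leaves (CNode true ch))) => [/mem_nodeP[k Hk Hwk]|] //=.
have ki : k <> i by move=> E; subst k; rewrite Hwk in Hw.
by rewrite (edge_ch HT Hs Hi Hk (fun E => ki (Logic.eq_sym E)) Hx Hwk) andbF.
Qed.

Lemma union_analysis ch' a x : is_subtree (CNode false ch') T -> a < size ch' ->
  x \in leaves (nth d0 ch' a) ->
  is_clique e (non_nbhd e (leafset (CNode false ch')) x) ->
  [/\ size ch' = 2,
      (forall b, b < size ch' -> b <> a -> is_clique e (leafset (nth d0 ch' b))) &
      (forall w, w \in leaves (nth d0 ch' a) -> w != x -> e x w)].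
Proof.
move=> Hs Ha Hx Hc.
have Hu := uniqT HT Hs.
have Hsz := size_ch HT Hs.
have Hout : forall b w, b < size ch' -> b <> a -> w \in leaves (nth d0 ch' b) ->
    w \in non_nbhd e (leafset (CNode false ch')) x.
  move=> b w Hb ba Hw; rewrite !inE (mem_node_nth false Hb Hw) /=.
  rewrite (edge_ch HT Hs Ha Hb (fun E => ba (Logic.eq_sym E)) Hx Hw) andbT.
  apply/eqP => E; subst w; exact: (uniq_disj Hu Ha Hb (fun E => ba (Logic.eq_sym E)) Hx Hw).
have Hne : forall b, b < size ch' -> exists w, w \in leaves (nth d0 ch' b).
  move=> b Hb; case: (nonempty HT (ch_sub Hs Hb)) => v Hv; by exists v.
have Hno : forall b b', b < size ch' -> b' < size ch' -> b <> a -> b' <> a -> b <> b' -> False.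
  move=> b b' Hb Hb' ba b'a bb'.
  case: (Hne b Hb) => w Hw; case: (Hne b' Hb') => w' Hw'.
  have ww' : w != w' by apply/eqP => E; subst w'; exact: (uniq_disj Hu Hb Hb' bb' Hw Hw').
  have := Hc w w' (Hout b w Hb ba Hw) (Hout b' w' Hb' b'a Hw') ww'.
  by rewrite (edge_ch HT Hs Hb Hb' bb' Hw Hw').
split.
- apply/eqP; rewrite eqn_leq Hsz andbT leqNgt; apply/negP => H3.
  case: a Ha Hx Hout Hno => [|[|a]] Ha Hx Hout Hno.
  + by apply: (Hno 1 2) => //; lia.
  + by apply: (Hno 0 2) => //; lia.
  + by apply: (Hno 0 1) => //; lia.
- move=> b Hb ba y z Hy Hz yz; rewrite !inE in Hy Hz.
  by apply: Hc => //; [apply: (Hout b y) | apply: (Hout b z)].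
- move=> w Hw wx; apply/negPn/negP => nxw.
  pose b := if a == 0 then 1 else 0.
  have Hb : b < size ch' by rewrite /b; case: eqP => _; lia.
  have ba : b <> a by rewrite /b; case: eqP; lia.
  case: (Hne b Hb) => w' Hw'.
  have Hwn : w \in non_nbhd e (leafset (CNode false ch')) x.
    by rewrite !inE (mem_node_nth false Ha Hw) wx nxw.
  have ww' : w != w'.
    apply/eqP => E; subst w'; exact: (uniq_disj Hu Ha Hb (fun E => ba (Logic.eq_sym E)) Hw Hw').
  have := Hc w w' Hwn (Hout b w' Hb ba Hw') ww'.
  by rewrite (edge_ch HT Hs Ha Hb (fun E => ba (Logic.eq_sym E)) Hw Hw').
Qed.


Lemma good_child ch i x : is_subtree (CNode true ch) T -> i < size ch ->
  x \in leaves (nth d0 ch i) ->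
  is_clique e (non_nbhd e (leafset (CNode true ch)) x) ->
  is_leaf (nth d0 ch i) \/ labelR e (nth d0 ch i).
Proof.
move=> Hs Hi Hx; rewrite (nn_child Hs Hi Hx).
have Hl := lab_ch HT Hs Hi. have Hsub := ch_sub Hs Hi.
move: Hx Hl Hsub; case: (nth d0 ch i) => [v|b ch'] Hx Hl Hsub Hc; first by left.
right; rewrite /= in Hl; subst b.
case/mem_nodeP: Hx => a Ha Hxa.
case: (union_analysis Hsub Ha Hxa Hc) => H2 Hcl Hdom.
case: ch' H2 Ha Hxa Hcl Hdom Hsub {Hc} => [|c0 [|c1 [|? ?]]] //= _ Ha Hxa Hcl Hdom Hsub.
exists c0, c1; split => //.
have [w0 Hw0] := nonempty HT (ch_sub Hsub (isT : 0 < 2)).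
have [w1 Hw1] := nonempty HT (ch_sub Hsub (isT : 1 < 2)).
case: a Ha Hxa Hcl Hdom => [|[|a]] // Ha Hxa Hcl Hdom.
- left; split.
  + apply: (gamma1I (x := x)); first by rewrite inE.
    move=> w; rewrite inE => Hw wx; rewrite esym; exact: Hdom.
  + apply: (gammas1I (x := w1)); first by rewrite inE.
    exact: (Hcl 1).
- right; split.
  + apply: (gamma1I (x := x)); first by rewrite inE.
    move=> w; rewrite inE => Hw wx; rewrite esym; exact: Hdom.
  + apply: (gammas1I (x := w0)); first by rewrite inE.
    exact: (Hcl 0).
Qed.

Lemma good_pair (c0 c1 u : cotree V) x :
  (forall w, w \in leaves u -> w \in leaves c0 \/ w \in leaves c1) ->
  (forall w, w \in leaves c0 -> w != x -> e w x) -> is_clique e (leafset c1) ->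
  is_clique e (non_nbhd e (leafset u) x).
Proof.
move=> Hu Hd Hc a b; rewrite !inE => /and3P[Ha ax nxa] /and3P[Hb bx nxb] ab.
have H : forall w, w \in leaves u -> w != x -> ~~ e x w -> w \in leafset c1.
  move=> w Hw wx nxw; case: (Hu w Hw) => H; last by rewrite inE.
  by move: nxw; rewrite esym Hd.
exact: Hc (H a Ha ax nxa) (H b Hb bx nxb) ab.
Qed.

Lemma good_exists ch i : is_subtree (CNode true ch) T -> i < size ch ->
  is_leaf (nth d0 ch i) \/ labelR e (nth d0 ch i) ->
  exists2 x, x \in leaves (nth d0 ch i) &
     is_clique e (non_nbhd e (leafset (CNode true ch)) x).
Proof.
move=> Hs Hi H.
suff [x Hx Hc] : exists2 x, x \in leaves (nth d0 ch i) &
     is_clique e (non_nbhd e (leafset (nth d0 ch i)) x).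
  by exists x => //; rewrite (nn_child Hs Hi Hx).
move: H; case: (nth d0 ch i) => [v|b ch'].
  move=> _; exists v; first by rewrite inE.
  by move=> a b; rewrite !inE => /andP[/eqP-> ]; rewrite eqxx.
case=> // [[c0 [c1 [[-> ->] H]]]].
have Hu : forall w, w \in leaves (CNode false [:: c0; c1]) -> w \in leaves c0 \/ w \in leaves c1.
  by move=> w; rewrite /= cats0 mem_cat => /orP.
case: H => [[G1 G2]|[G1 G2]].
- have [x Hx Hd] := gamma1P G1; exists x; first by rewrite /= mem_cat; rewrite inE in Hx; rewrite Hx.
  apply: (good_pair Hu) => [w Hw wx|]; [apply: Hd => //; by rewrite inE | exact: gammas1P].
- have [x Hx Hd] := gamma1P G1; exists x.
    by rewrite inE in Hx; rewrite /= !mem_cat Hx orbT.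
  have Hu' : forall w, w \in leaves (CNode false [:: c0; c1]) -> w \in leaves c1 \/ w \in leaves c0.
    by move=> w /Hu [] ?; [right|left].
  apply: (good_pair Hu') => [w Hw wx|]; [apply: Hd => //; by rewrite inE | exact: gammas1P].
Qed.


Lemma nn_sub (A B S : {set V}) x : S = A :|: B -> x \in A -> is_clique e A -> is_clique e B ->
  is_clique e (non_nbhd e S x).
Proof.
move=> HS xA cA cB p q; rewrite !inE => /and3P[pS px npx] /and3P[qS qx nqx] pq.
have inB : forall r, r \in S -> r != x -> ~~ e x r -> r \in B.
  move=> r rS rx nxr; move: rS; rewrite HS => /setUP[rA|] //.
  by rewrite (cA x r xA rA) // eq_sym in nxr.
exact: cB (inB p pS px npx) (inB q qS qx nqx) pq.
Qed.

End M.

Theorem lemma3 (V : finType) (e : rel V) (esym : symmetric e) (eirr : irreflexive e)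
  (T : cotree V) (HT : is_cotree e T) (ch : seq (cotree V))
  (Hc : is_subtree (CNode true ch) T) :
  propP e (leafset (CNode true ch)) <->
  (2 <= size ch /\
   ((exists i j, [/\ i < size ch, j < size ch, i <> j,
        is_leaf (nth (CNode false [::]) ch i) \/ labelR e (nth (CNode false [::]) ch i) &
        is_leaf (nth (CNode false [::]) ch j) \/ labelR e (nth (CNode false [::]) ch j)])
    \/ (exists u, Stdlib.Lists.List.In u ch /\ labelR e u /\ two_cliques e (leafset u)))).
Proof.
have Hsz := size_ch HT Hc.
have n01 : (0 : nat) <> 1 by [].
split.
- case=> x [y [xS yS xy dom [nx ny]]].
  move/clique_or in nx; move/clique_or in ny.
  split => //.
  move: xS yS; rewrite !inE => xS yS.
  case/mem_nodeP: xS => i Hi Hxi; case/mem_nodeP: yS => j Hj Hyj.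
  case: (eqVneq i j) => [Eij|Nij]; last first.
    left; exists i, j; split => //; first by apply/eqP.
      exact: (good_child esym HT Hc Hi Hxi nx).
    exact: (good_child esym HT Hc Hj Hyj ny).
  subst j; right; exists (nth (CNode false [::]) ch i); split; first exact: nthIn.
  have HR := good_child esym HT Hc Hi Hxi nx.
  rewrite (nn_child HT Hc Hi Hxi) in nx; rewrite (nn_child HT Hc Hi Hyj) in ny.
  have Hl := lab_ch HT Hc Hi; have Hsub := ch_sub Hc Hi.
  have xyS : forall w, w \in leaves (nth (CNode false [::]) ch i) -> w \in leafset (CNode true ch).
    by move=> w Hw; rewrite inE; apply: (mem_node_nth true Hi).
  move: Hxi Hyj Hl Hsub nx ny HR xyS; case: (nth (CNode false [::]) ch i) => [v|b ch'] Hxi Hyj Hl Hsub nx ny HR xyS.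
    rewrite !inE in Hxi Hyj; by rewrite (eqP Hxi) (eqP Hyj) eqxx in xy.
  case: HR => // HR; split; first exact: HR.
  rewrite /= in Hl; subst b.
  case/mem_nodeP: Hxi => a Ha Hxa; case/mem_nodeP: Hyj => b Hb Hyb.
  have [H2 Hcx Hdx] := union_analysis HT Hsub Ha Hxa nx.
  have [_ Hcy Hdy] := union_analysis HT Hsub Hb Hyb ny.
  have Hus := uniqT HT Hsub.
  have ab : a <> b.
    move=> E; subst b.
    pose b' := if a == 0 then 1 else 0.
    have Hb' : b' < size ch' by rewrite /b'; case: eqP => _; lia.
    have b'a : b' <> a by rewrite /b'; case: eqP; lia.
    have [w Hw] := nonempty HT (ch_sub Hsub Hb').
    have wS := xyS w (mem_node_nth false Hb' Hw).
    have wx : w != x by apply/eqP => E; subst w; exact: (uniq_disj Hus Hb' Ha b'a Hw Hxa).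
    have wy : w != y by apply/eqP => E; subst w; exact: (uniq_disj Hus Hb' Ha b'a Hw Hyb).
    move/andP: dom => [_ /forallP /(_ w)]; rewrite !inE (negbTE wx) (negbTE wy) /=.
    rewrite inE in wS; rewrite wS /= => /existsP[z /andP[]]; rewrite !inE => /orP[/eqP->|/eqP->].
      by rewrite (edge_ch HT Hsub Hb' Ha b'a Hw Hxa).
    by rewrite (edge_ch HT Hsub Hb' Ha b'a Hw Hyb).
  have Hcl : forall k, k < 2 -> is_clique e (leafset (nth (CNode false [::]) ch' k)).
    move=> k Hk; case: (eqVneq k a) => [E|ka].
      subst k; apply: Hcy; [by rewrite H2 | done].
    apply: Hcx; [by rewrite H2 | by apply/eqP].
  clear Hcx Hcy Hdx Hdy Hxa Hyb nx ny xyS HR.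
  case: ch' H2 Hcl Hsub Hus Ha Hb => [|c0 [|c1 [|? ?]]] //= _ Hcl Hsub Hus _ _.
  have [w0 Hw0] := nonempty HT (ch_sub Hsub (isT : 0 < 2)).
  have [w1 Hw1] := nonempty HT (ch_sub Hsub (isT : 1 < 2)).
  exists (leafset c0), (leafset c1); split.
  + by apply/set0Pn; exists w0; rewrite inE.
  + by apply/set0Pn; exists w1; rewrite inE.
  + rewrite -setI_eq0; apply/eqP/setP => w; rewrite !inE; apply/negP => /andP[H0 H1].
    exact: (@uniq_disj _ false [:: c0; c1] 0 1 w Hus isT isT n01 H0 H1).
  + by apply/setP => w; rewrite !inE /= cats0 mem_cat.
  + split; [exact: (Hcl 0) | exact: (Hcl 1) |].
    move=> p q; rewrite !inE => Hp Hq.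
    by rewrite (edge_ch HT Hsub (isT : 0 < 2) (isT : 1 < 2) n01 Hp Hq).
- case=> _ [[i [j [Hi Hj ij gi gj]]] | [u [Hin [HR Htc]]]].
  + have [x Hx nx] := good_exists esym HT Hc Hi gi.
    have [y Hy ny] := good_exists esym HT Hc Hj gj.
    have exy := edge_ch HT Hc Hi Hj ij Hx Hy.
    exists x, y; split.
    * rewrite inE; exact: (mem_node_nth true Hi Hx).
    * rewrite inE; exact: (mem_node_nth true Hj Hy).
    * apply/eqP => E; subst y; by rewrite eirr in exy.
    * apply/andP; split.
        apply/subsetP => z; rewrite !inE => /orP[/eqP->|/eqP->].
          exact: (mem_node_nth true Hi Hx).
        exact: (mem_node_nth true Hj Hy).
      apply/forallP => w; apply/implyP; rewrite !inE => /andP[Hwxy].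
      case/mem_nodeP => k Hk Hwk; apply/existsP.
      case: (eqVneq k i) => [E|ki].
        subst k; exists y; rewrite !inE eqxx orbT /=.
        by rewrite (edge_ch HT Hc Hk Hj ij Hwk Hy).
      have ki' : k <> i by apply/eqP.
      exists x; rewrite !inE eqxx /=.
      by rewrite (edge_ch HT Hc Hk Hi ki' Hwk Hx).
    * by split; right.
  + have [i Hi Ei] := Innth Hin; subst u.
    case: Htc => A [B [An Bn dAB UAB [cA cB nAB]]].
    have [x xA] := set0Pn _ An; have [y yB] := set0Pn _ Bn.
    have xu : x \in leaves (nth (CNode false [::]) ch i).
      have : x \in leafset (nth (CNode false [::]) ch i) by rewrite -UAB inE xA.
      by rewrite inE.
    have yu : y \in leaves (nth (CNode false [::]) ch i).
      have : y \in leafset (nth (CNode false [::]) ch i) by rewrite -UAB inE yB orbT.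
      by rewrite inE.
    have xy : x != y.
      apply/eqP => E; subst y; move: dAB; rewrite -setI_eq0 => /eqP/setP/(_ x).
      by rewrite !inE xA yB.
    exists x, y; split.
    * rewrite inE; exact: (mem_node_nth true Hi xu).
    * rewrite inE; exact: (mem_node_nth true Hi yu).
    * exact: xy.
    * apply/andP; split.
        apply/subsetP => z; rewrite !inE => /orP[/eqP->|/eqP->].
          exact: (mem_node_nth true Hi xu).
        exact: (mem_node_nth true Hi yu).
      apply/forallP => w; apply/implyP; rewrite !inE => /andP[Hwxy].
      case/mem_nodeP => k Hk Hwk; apply/existsP.
      case: (eqVneq k i) => [E|ki]; last first.
        have ki' : k <> i by apply/eqP.
        exists x; rewrite !inE eqxx /=.
        by rewrite (edge_ch HT Hc Hk Hi ki' Hwk xu).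
      subst k.
      have : w \in A :|: B by rewrite UAB inE.
      move: Hwxy; rewrite negb_or => /andP[wx wy].
      case/setUP => [wA|wB].
        by exists x; rewrite !inE eqxx /= (cA w x wA xA wx).
      by exists y; rewrite !inE eqxx orbT /= (cB w y wB yB wy).
    * split; right.
        rewrite (nn_child HT Hc Hi xu); apply: (nn_sub (Logic.eq_sym UAB) xA cA cB).
      rewrite (nn_child HT Hc Hi yu); apply: (nn_sub (A := B) (B := A)) yB cB cA.
      by rewrite setUC.
Qed.
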